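(* Let $n,d,a$ be positive integers. The triple $(n,d,a)$ is bad if and only if there exists a point $Q\in\mathcal{V}_d$ such that $\mathcal{P}_\lambda(Q)=0$ for every partition $\lambda$ of $a$.
   Context: $\mathcal{V}_d=\{(z_1,\dots,z_n)\in\mathbb{C}^n: z_i^d=1\ \forall i,\ z_n=1\}$. For a positive integer $m$, $\mathcal{P}_m=x_1^m+\dots+x_n^m$, and for a partition $\lambda=(\lambda_1,\dots,\lambda_r)$, $\mathcal{P}_\lambda=\prod_{t=1}^r\mathcal{P}_{\lambda_t}$. Let $R=\mathbb{C}[x_1,\dots,x_n]$ with $\mathfrak{S}_n$ permuting variables, and $R_a^{\mathfrak{S}_n}$ the symmetric polynomials homogeneous of degree $a$. The triple $(n,d,a)$ is good if there exists $f\in R_a^{\mathfrak{S}_n}$ such that $x_1^d-x_n^d,\dots,x_{n-1}^d-x_n^d,f$ is a regular sequence (equivalently, $f$ has no zero on $\mathcal{V}_d$); otherwise it is bad. *)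

(* Defs.v *)
From HB Require Import structures.
From mathcomp Require Import all_boot all_order all_algebra.
From mathcomp Require Import reals.
From mathcomp Require Import complex.
From mathcomp Require Import mpoly.
Set Implicit Arguments. Unset Strict Implicit. Unset Printing Implicit Defensive.
Import Order.TTheory GRing.Theory Num.Theory.
Local Open Scope ring_scope.

(* V_d = {z in C^n : z_i^d = 1 for all i, z_n = 1}; coordinates are indexed
   by 'I_n = {0,...,n-1}, so z_n is the coordinate of index n-1. *)
Definition in_Vd (C : nzRingType) (n d : nat) (z : 'I_n -> C) : Prop :=
  (forall i : 'I_n, z i ^+ d = 1) /\ (forall i : 'I_n, val i = n.-1 -> z i = 1).

Definition powsum (C : nzRingType) (n m : nat) : {mpoly C[n]} :=
  \sum_(i < n) 'X_i ^+ m.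

Definition powsum_part (C : nzRingType) (n : nat) (la : seq nat) : {mpoly C[n]} :=
  \prod_(m <- la) powsum C n m.

Definition is_partition (a : nat) (la : seq nat) : bool :=
  [&& sorted geq la, all (fun m => 0 < m)%N la & sumn la == a].

Definition good (R : realType) (n d k : nat) : Prop :=
  exists f : {mpoly R[i][n]},
    [/\ f \is symmetric, f \is k.-homog &
        forall z : 'I_n -> R[i], in_Vd d z -> f.@[z] != 0].

Definition bad (R : realType) (n d k : nat) : Prop := ~ good R n d k.

(* Main.v *)
Require Import Defs.
From HB Require Import structures.
From mathcomp Require Import all_boot all_order all_algebra.
From mathcomp Require Import reals complex mpoly.
From mathcomp Require Import ring perm.
From Stdlib Require Import Classical ClassicalEpsilon.
Set Implicit Arguments. Unset Strict Implicit. Unset Printing Implicit Defensive.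
Import Order.TTheory GRing.Theory Num.Theory.
Local Open Scope ring_scope.

Section Newton.
Variable C : comNzRingType.

Definition shf (x : C) (e : nat -> C) k := if k is j.+1 then x * e j else 0.

Definition newton_prop (e p : nat -> C) :=
  forall k, (k.+1)%:R * e k.+1 = \sum_(i < k.+1) (-1) ^+ i * e (k - i)%N * p i.+1.

Lemma newton_step (e p : nat -> C) (x : C) :
  newton_prop e p ->
  newton_prop (fun k => e k + shf x e k)
              (fun i => p i + x ^+ i).
Proof.
move=> Ne k /=.
have E1 : \sum_(i < k.+1) (-1) ^+ i *
      (e (k - i)%N + shf x e (k - i)%N) * (p i.+1 + x ^+ i.+1)
   = \sum_(i < k.+1) (-1) ^+ i * e (k - i)%N * p i.+1
   + \sum_(i < k.+1) (-1) ^+ i * e (k - i)%N * x ^+ i.+1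
   + \sum_(i < k.+1) (-1) ^+ i * shf x e (k - i)%N * (p i.+1 + x ^+ i.+1).
  rewrite -!big_split /=; apply: eq_bigr => i _. ring.
rewrite E1 -Ne; clear E1.
case: k => [|k].
  rewrite !big_ord1 /= subnn /shf !expr0 !mul1r; ring.
rewrite [\sum_(i < k.+2) _ * shf _ _ _ * _]big_ord_recr /= subnn.
rewrite {2}/shf mulr0 mul0r addr0.
have E2 : \sum_(i < k.+1) (-1) ^+ i * shf x e (k.+1 - i)%N *
         (p i.+1 + x ^+ i.+1)
   = x * \sum_(i < k.+1) (-1) ^+ i * e (k - i)%N * p i.+1
     + \sum_(i < k.+1) (-1) ^+ i * e (k - i)%N * x ^+ i.+2.
  rewrite mulr_sumr -big_split /=; apply: eq_bigr => i _.
  rewrite subSn /shf; last by rewrite -ltnS.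
  rewrite !exprS; ring.
rewrite E2 -Ne big_ord_recl /= subn0.
have E3 : \sum_(i < k.+1) (-1) ^+ (bump 0 i) * e (k.+1 - bump 0 i)%N * x ^+ (bump 0 i).+1
   = - \sum_(i < k.+1) (-1) ^+ i * e (k - i)%N * x ^+ i.+2.
  rewrite -sumrN; apply: eq_bigr => i _.
  rewrite /bump /= add1n subSS !exprS; ring.
rewrite E3 expr0 expr1; rewrite -[(k.+2)%:R]natr1 -[(k.+1)%:R]natr1; ring.
Qed.

End Newton.

Section NewtonMpoly.
Variable C : comNzRingType.

Lemma newton_ext (e1 e2 p1 p2 : nat -> C) :
  e1 =1 e2 -> p1 =1 p2 -> newton_prop e1 p1 -> newton_prop e2 p2.
Proof.
move=> He Hp N k; rewrite -He N; apply: eq_bigr => i _; by rewrite He Hp.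
Qed.

Lemma mwiden_meval n (p : {mpoly C[n]}) (v : 'I_n.+1 -> C) :
  (mwiden p).@[v] = p.@[fun i => v (widen_ord (leqnSn n) i)].
Proof.
elim/mpolyind: p => [|c m p _ _ IH]; first by rewrite !raddf0.
rewrite !raddfD /= IH mwidenZ !mevalZ mwidenX !mevalX; congr (_ * _ + _).
rewrite big_ord_recr /= mnmwiden_ordmax expr0 mulr1.
by apply: eq_bigr => i _; rewrite mnmwiden_widen.
Qed.

Lemma newton_mesym n (Q : 'I_n -> C) :
  newton_prop (fun k => (mesym n C k).@[Q]) (fun i => \sum_(j < n) Q j ^+ i).
Proof.
elim: n Q => [|n IH] Q.
  move=> k; rewrite mesym_geqnE // meval0 mulr0 big1 // => i _.
  by rewrite big_ord0 mulr0.
pose Q' := fun i : 'I_n => Q (widen_ord (leqnSn n) i).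
apply: (newton_ext _ _ (newton_step (Q ord_max) (IH Q'))).
  case=> [|k] /=; first by rewrite /shf !mesym0E !meval1 addr0.
  rewrite mesymSS mevalD mevalM !mwiden_meval mevalXU /shf; ring.
move=> i /=; by rewrite big_ord_recr.
Qed.

End NewtonMpoly.

Section Span.
Variable C : numFieldType.
Variable s : nat -> C.

Definition okq (w : nat) (q : C * seq nat) :=
  (sumn q.2 == w) && all (fun m => 0 < m)%N q.2.

Definition Sp (w : nat) (x : C) :=
  exists r : seq (C * seq nat),
    all (okq w) r /\ x = \sum_(q <- r) q.1 * \prod_(m <- q.2) s m.

Lemma Sp_s m : (0 < m)%N -> Sp m (s m).
Proof.
move=> Hm; exists [:: (1, [:: m])]; split.
  by rewrite /= /okq /= addn0 eqxx Hm.
by rewrite big_seq1 /= big_seq1 mul1r.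
Qed.

Lemma Sp_1 : Sp 0 1.
Proof. by exists [:: (1, [::])]; split; rewrite ?big_seq1 /= ?big_nil ?mul1r. Qed.

Lemma Sp_0 w : Sp w 0.
Proof. by exists [::]; rewrite big_nil. Qed.

Lemma Sp_add w x y : Sp w x -> Sp w y -> Sp w (x + y).
Proof.
move=> [r1 [H1 ->]] [r2 [H2 ->]]; exists (r1 ++ r2).
by rewrite all_cat H1 H2 big_cat.
Qed.

Lemma Sp_scale w c x : Sp w x -> Sp w (c * x).
Proof.
move=> [r [H ->]]; exists [seq (c * q.1, q.2) | q <- r]; split.
  by rewrite all_map; apply: sub_all H => q.
by rewrite big_map mulr_sumr; apply: eq_bigr => q _ /=; rewrite mulrA.
Qed.

Lemma Sp_mul w v x y : Sp w x -> Sp v y -> Sp (w + v) (x * y).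
Proof.
move=> [r1 [H1 ->]] [r2 [H2 ->]].
exists [seq (q1.1 * q2.1, q1.2 ++ q2.2) | q1 <- r1, q2 <- r2]; split.
  apply/allP => q /allpairsPdep [q1 [q2 [/(allP H1) Hq1 /(allP H2) Hq2 ->]]] /=.
  move: Hq1 Hq2; rewrite /okq /= sumn_cat all_cat.
  by case/andP => /eqP -> -> /andP [/eqP -> ->]; rewrite eqxx.
rewrite big_allpairs_dep mulr_suml; apply: eq_bigr => q1 _.
rewrite mulr_sumr; apply: eq_bigr => q2 _ /=.
rewrite big_cat /=; ring.
Qed.

Lemma Sp_sum (I : Type) (r : seq I) (P : pred I) (F : I -> C) w :
  (forall i, P i -> Sp w (F i)) -> Sp w (\sum_(i <- r | P i) F i).
Proof.
move=> H; apply: (big_ind (Sp w)); [exact: Sp_0 | exact: Sp_add | exact: H].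
Qed.

Lemma Sp_prod (I : Type) (r : seq I) (P : pred I) (F : I -> C) (W : I -> nat) :
  (forall i, P i -> Sp (W i) (F i)) ->
  Sp (\sum_(i <- r | P i) W i)%N (\prod_(i <- r | P i) F i).
Proof.
move=> H.
apply: (big_ind2 (fun w x => Sp x w)); [exact: Sp_1 | | exact: H].
by move=> x1 x2 y1 y2 A B; apply: Sp_mul.
Qed.

Lemma Sp_exp w x k : Sp w x -> Sp (w * k) (x ^+ k).
Proof.
move=> H; elim: k => [|k IH]; first by rewrite muln0 expr0; exact: Sp_1.
by rewrite exprS mulnS; apply: Sp_mul.
Qed.

Lemma Sp_newton (e : nat -> C) :
  newton_prop e s -> e 0%N = 1 -> forall k, Sp k (e k).
Proof.
move=> N e0 k; elim: k {-2}k (leqnn k) => [|k IH] j Hj.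
  by move: Hj; rewrite leqn0 => /eqP ->; rewrite e0; exact: Sp_1.
move: Hj; rewrite leq_eqVlt => /orP [/eqP ->|]; last by rewrite ltnS; apply: IH.
have Hk : (k.+1)%:R != 0 :> C by rewrite pnatr_eq0.
have -> : e k.+1 = (k.+1)%:R^-1 * ((k.+1)%:R * e k.+1) by rewrite mulrA mulVf ?mul1r.
apply: Sp_scale; rewrite N; apply: Sp_sum => i _.
have -> : Sp k.+1 = Sp ((k - i) + i.+1)%N by rewrite addnS subnK // -ltnS.
apply: Sp_mul; last exact: Sp_s.
apply: Sp_scale; apply: IH; exact: leq_subr.
Qed.

Lemma Sp_kill a x : (forall la, is_partition a la -> \prod_(m <- la) s m = 0) ->
  Sp a x -> x = 0.
Proof.
move=> H [r [Hr ->]]; rewrite big_seq big1 // => q /(allP Hr) /andP [/eqP Hs Hp].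
have hp : perm_eq (sort geq q.2) q.2 by rewrite perm_sort.
rewrite -(perm_big _ hp) /= H ?mulr0 //.
rewrite /is_partition sort_sorted; last by move=> u v; exact: leq_total.
by rewrite all_sort Hp (perm_sumn hp) Hs eqxx.
Qed.

End Span.

Section Vanish.
Variable C : numFieldType.

Lemma meval_powsum n (Q : 'I_n -> C) m :
  (powsum C n m).@[Q] = \sum_(j < n) Q j ^+ m.
Proof.
rewrite /powsum (big_morph _ (mevalD Q) (meval0 Q)); apply: eq_bigr => j _.
elim: m => [|m IH]; first by rewrite !expr0 meval1.
by rewrite !exprS mevalM IH mevalXU.
Qed.

Lemma meval_powsum_part n (Q : 'I_n -> C) la :
  (powsum_part C n la).@[Q] = \prod_(m <- la) \sum_(j < n) Q j ^+ m.
Proof.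
rewrite /powsum_part; elim: la => [|m la IH]; first by rewrite !big_nil meval1.
by rewrite !big_cons mevalM IH meval_powsum.
Qed.

Lemma vanish n k (f : {mpoly C[n]}) (Q : 'I_n -> C) :
  f \is symmetric -> f \is k.-homog ->
  (forall la, is_partition k la -> (powsum_part C n la).@[Q] = 0) -> f.@[Q] = 0.
Proof.
move=> fsym fhom H.
pose s := fun m => \sum_(j < n) Q j ^+ m.
have Hk : forall la, is_partition k la -> \prod_(m <- la) s m = 0.
  by move=> la /H; rewrite meval_powsum_part.
have [t [tS th]] := sym_fundamental_homog fsym fhom.
rewrite -tS comp_mpoly_meval mevalE.
apply: (Sp_kill Hk); rewrite big_seq; apply: Sp_sum => m Hm.
apply: Sp_scale.
have <- : mnmwgt m = k by move/dhomogP: th => /(_ m Hm).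
rewrite /mnmwgt; apply: Sp_prod => i _.
rewrite tnth_mktuple mulnC; apply: Sp_exp.
apply: (Sp_newton (newton_mesym Q)).
by rewrite mesym0E meval1.
Qed.

End Vanish.

Section Construct.
Variable C : closedFieldType.

Lemma msymXU n (s : 'S_n) (i : 'I_n) : msym s ('X_i : {mpoly C[n]}) = 'X_(s i).
Proof.
rewrite msymX; congr mpolyX; apply/mnmP => j; rewrite !mnmE.
congr (nat_of_bool _).
by apply/idP/idP => /eqP H; apply/eqP; [rewrite H permKV | rewrite -H permK].
Qed.

Lemma powsum_sym n m : powsum C n m \is symmetric.
Proof.
apply/issymP => s; rewrite /powsum raddf_sum /=.
under eq_bigr => i _ do rewrite rmorphXn /= msymXU.
by rewrite [RHS](reindex_inj (@perm_inj _ s)).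
Qed.

Lemma powsum_part_sym n la : powsum_part C n la \is symmetric.
Proof. by apply: rpred_prod => m _; exact: powsum_sym. Qed.

Lemma powsum_homog n m : powsum C n m \is m.-homog.
Proof.
apply: rpred_sum => i _.
have := dhomogMn m (_ : ('X_i : {mpoly C[n]}) \is 1.-homog).
rewrite mul1n; apply; by rewrite dhomogX /= mdeg1.
Qed.

Lemma powsum_part_homog n la : powsum_part C n la \is (sumn la).-homog.
Proof.
rewrite /powsum_part; elim: la => [|m la IH]; first by rewrite big_nil dhomog1.
by rewrite big_cons /=; apply: dhomogM => //; exact: powsum_homog.
Qed.

Lemma construct n d K : (0 < d)%N -> (0 < K)%N ->
  (forall Q : 'I_n -> C, in_Vd d Q ->
     exists la, is_partition K la /\ (powsum_part C n la).@[Q] != 0) ->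
  exists f : {mpoly C[n]},
    [/\ f \is symmetric, f \is K.-homog & forall z, in_Vd d z -> f.@[z] != 0].
Proof.
move=> Hd HK H.
have [rs Hrs] := closed_field_poly_normal ('X^d - 1 : {poly C}).
have Hmon := monicXnsubC (1 : C) Hd.
have Hin : forall z : C, z ^+ d = 1 -> z \in rs.
  move=> z Hz.
  have Hl : lead_coef ('X^d - 1 : {poly C}) != 0 by rewrite (monicP Hmon) oner_neq0.
  rewrite -root_prod_XsubC -(rootZ _ _ Hl) -Hrs.
  by rewrite /root !hornerE Hz subrr.
pose T := {ffun 'I_n -> 'I_(size rs)}.
pose pt (k : T) := fun i => nth 0 rs (k i).
have Hpt : forall Q, in_Vd d Q -> exists k : T, Q =1 pt k.
  move=> Q [HQ _].
  have Hi i : (index (Q i) rs < size rs)%N by rewrite index_mem Hin.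
  by exists [ffun i => Ordinal (Hi i)] => i; rewrite /pt ffunE /= nth_index ?Hin.
have Hex : forall k : T, exists la, is_partition K la /\
    (in_Vd d (pt k) -> (powsum_part C n la).@[pt k] != 0).
  move=> k; case: (classic (in_Vd d (pt k))) => Hk.
    by have [la [H1 H2]] := H _ Hk; exists la.
  by exists [:: K]; split => //; rewrite /is_partition /= HK addn0 eqxx.
pose lam k := proj1_sig (constructive_indefinite_description _ (Hex k)).
have Hlam k : is_partition K (lam k) /\
    (in_Vd d (pt k) -> (powsum_part C n (lam k)).@[pt k] != 0).
  exact: (proj2_sig (constructive_indefinite_description _ (Hex k))).
pose pk (k : T) : {poly C} :=
  \sum_(k' : T) ((powsum_part C n (lam k')).@[pt k])%:P * 'X^(enum_rank k').
pose Pi := \prod_(k : T | pk k != 0) pk k.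
have : Pi != 0 by rewrite prodf_seq_neq0; apply/allP => k _; apply/implyP.
case/closed_nonrootP => t Ht.
exists (\sum_(k' : T) t ^+ enum_rank k' *: powsum_part C n (lam k')); split.
- by apply: rpred_sum => k' _; apply: rpredZ; exact: powsum_part_sym.
- apply: rpred_sum => k' _; apply: rpredZ.
  have := powsum_part_homog n (lam k').
  by case: (Hlam k') => /and3P [_ _ /eqP ->].
move=> z Hz; have [k Hk] := Hpt z Hz.
have Hkv : in_Vd d (pt k).
  by case: Hz => [H1 H2]; split => i; rewrite -Hk; [exact: H1 | exact: H2].
rewrite (meval_eq _ Hk).
have -> : (\sum_(k' : T) t ^+ enum_rank k' *: powsum_part C n (lam k')).@[pt k]
    = (pk k).[t].
  rewrite (big_morph _ (mevalD _) (meval0 _)) horner_sum; apply: eq_bigr => k' _.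
  by rewrite mevalZ hornerCM hornerXn mulrC.
have pk_nz : pk k != 0.
  apply/eqP => /(congr1 (fun p : {poly C} => p`_(enum_rank k))).
  rewrite coef0 coef_sum (bigD1 k) //= coefCM coefXn eqxx mulr1 big1 ?addr0.
    by apply/eqP; apply: (proj2 (Hlam k)).
  move=> k' Hk'; rewrite coefCM coefXn.
  case: eqP => [/val_inj/enum_rank_inj E|]; last by rewrite mulr0.
  by rewrite E eqxx in Hk'.
move: Ht; rewrite /root /Pi horner_prod prodf_seq_neq0.
by move=> /allP /(_ k (mem_index_enum k)) /implyP /(_ pk_nz).
Qed.

End Construct.

Theorem lemma3p4 (R : realType) (n d a : nat) :
  (0 < n)%N -> (0 < d)%N -> (0 < a)%N ->
  (bad R n d a <->
   exists Q : 'I_n -> R[i],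
     in_Vd d Q /\
     forall la : seq nat, is_partition a la -> (powsum_part R[i] n la).@[Q] = 0).
Proof.
move=> Hn Hd Ha; split.
- move=> Hbad; apply: NNPP => Hno; apply: Hbad.
  apply: (@construct R[i] n d a Hd Ha) => Q HQ.
  apply: NNPP => Hnla; apply: Hno; exists Q; split => // la Hla.
  apply/eqP; apply/negPn/negP => Hne; apply: Hnla; by exists la.
- move=> [Q [HQ HP]] [f [fs fh fz]].
  by have := fz Q HQ; rewrite (vanish fs fh HP) eqxx.
Qed.
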